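(* Every infinite set $X\subseteq\omega$ has an infinite subset $B$ such that for all infinite $C, D\subseteq B$ there is no Turing functional $\Phi$ with $\Phi(S) = C$ for every infinite $S\subseteq D$. *)

(* Defs.v *)
(* Computability relative to an oracle, via oracle partial
   mu-recursive functions (Kleene). Subsets of omega are represented by their
   characteristic functions nat -> bool. *)
From Stdlib Require Import List Arith.
Import ListNotations.

Inductive prf : Type :=
| PZero : prf
| PSucc : prf
| PProj : nat -> prf
| POracle : prf
| PComp : prf -> list prf -> prf
| PRec : prf -> prf -> prf
| PMin : prf -> prf.

Inductive eval (A : nat -> bool) : prf -> list nat -> nat -> Prop :=
| e_zero args : eval A PZero args 0
| e_succ args : eval A PSucc args (S (hd 0 args))
| e_proj i args : eval A (PProj i) args (nth i args 0)
| e_oracle args : eval A POracle args (if A (hd 0 args) then 1 else 0)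
| e_comp f gs args vs v :
    evals A gs args vs -> eval A f vs v -> eval A (PComp f gs) args v
| e_rec0 f g ys v : eval A f ys v -> eval A (PRec f g) (0 :: ys) v
| e_recS f g k ys r v :
    eval A (PRec f g) (k :: ys) r -> eval A g (k :: r :: ys) v ->
    eval A (PRec f g) (S k :: ys) v
| e_min f args x :
    eval A f (x :: args) 0 ->
    (forall y, y < x -> exists v, eval A f (y :: args) (S v)) ->
    eval A (PMin f) args x
with evals (A : nat -> bool) : list prf -> list nat -> list nat -> Prop :=
| es_nil args : evals A [] args []
| es_cons g gs args v vs :
    eval A g args v -> evals A gs args vs -> evals A (g :: gs) args (v :: vs).

Definition functional_computes (e : prf) (S C : nat -> bool) : Prop :=
  forall n, eval S e [n] (if C n then 1 else 0).

Definition infinite (X : nat -> bool) : Prop :=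
  forall n, exists m, n <= m /\ X m = true.

Definition subset (Y X : nat -> bool) : Prop :=
  forall n, Y n = true -> X n = true.

(* Main.v *)
Require Import Defs.
From Stdlib Require Import List Arith Lia Bool Classical ClassicalEpsilon.
From Stdlib Require Cantor.
Import ListNotations.

Lemma to_inj p q : Cantor.to_nat p = Cantor.to_nat q -> p = q.
Proof. intro H. rewrite <- (Cantor.cancel_of_to p), <- (Cantor.cancel_of_to q), H. reflexivity. Qed.

Definition pr2 (a b : nat) := Cantor.to_nat (a, b).
Arguments pr2 : simpl never.
Lemma pr2_inj a b c d : pr2 a b = pr2 c d -> a = c /\ b = d.
Proof. unfold pr2. intro H. apply to_inj in H. injection H. auto. Qed.

Fixpoint enc (e : prf) : nat :=
  match e with
  | PZero => pr2 0 0
  | PSucc => pr2 1 0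
  | PProj i => pr2 2 i
  | POracle => pr2 3 0
  | PComp f gs => pr2 4 (pr2 (enc f)
       ((fix encl (l : list prf) : nat := match l with
          | [] => 0 | g :: l' => S (pr2 (enc g) (encl l')) end) gs))
  | PRec f g => pr2 5 (pr2 (enc f) (enc g))
  | PMin f => pr2 6 (enc f)
  end.

Fixpoint enc_inj (e : prf) {struct e} : forall e', enc e = enc e' -> e = e'.
Proof.
  destruct e as [| | i | | f gs | f g | f]; intros [| | i' | | f' gs' | f' g' | f'] H;
    simpl in H; apply pr2_inj in H; destruct H as [H0 H]; try discriminate; subst; try reflexivity.
  - apply pr2_inj in H; destruct H as [Hf Hl].
    apply enc_inj in Hf. subst f'. f_equal.
    revert gs' Hl. induction gs as [|g gs IH]; intros [|g' gs'] Hl; try discriminate; try reflexivity.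
    injection Hl; intro Hl'. apply pr2_inj in Hl'. destruct Hl' as [H1 H2].
    apply enc_inj in H1. subst g'. f_equal. apply IH. exact H2.
  - apply pr2_inj in H; destruct H as [Hf Hg].
    apply enc_inj in Hf. apply enc_inj in Hg. subst; reflexivity.
  - f_equal. apply enc_inj. assumption.
Qed.

Lemma enum_ex : exists enum : nat -> prf, forall e, exists n, enum n = e.
Proof.
  assert (H : forall n, exists e, (exists e', enc e' = n) -> enc e = n).
  { intro n. destruct (classic (exists e', enc e' = n)) as [[e' He']|Hn].
    - exists e'. auto.
    - exists PZero. intro; contradiction. }
  exists (fun n => proj1_sig (constructive_indefinite_description _ (H n))).
  intro e. exists (enc e).
  destruct (constructive_indefinite_description _ (H (enc e))) as [x Hx]. simpl.
  apply enc_inj. apply Hx. eauto.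
Qed.

Fixpoint eval_det A e args v (H : eval A e args v) {struct H} :
  forall v', eval A e args v' -> v = v'
with evals_det A gs args vs (H : evals A gs args vs) {struct H} :
  forall vs', evals A gs args vs' -> vs = vs'.
Proof.
  - destruct H; intros v' H'; inversion H'; subst; try reflexivity.
    + pose proof (evals_det _ _ _ _ H _ H3) as E. subst. exact (eval_det _ _ _ _ H0 _ H6).
    + exact (eval_det _ _ _ _ H _ H4).
    + pose proof (eval_det _ _ _ _ H _ H6) as E. subst. exact (eval_det _ _ _ _ H0 _ H7).
    + destruct (lt_eq_lt_dec x v') as [[Hlt|Heq]|Hlt]; [ | exact Heq | ].
      * destruct (H3 x Hlt) as [w Hw]. pose proof (eval_det _ _ _ _ H _ Hw). discriminate.
      * destruct (H0 v' Hlt) as [w Hw]. pose proof (eval_det _ _ _ _ Hw _ H2). discriminate.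
  - destruct H; intros vs' H'; inversion H'; subst; try reflexivity.
    match goal with H1 : eval A g args _, H2 : evals A gs args _ |- _ =>
      pose proof (eval_det _ _ _ _ H _ H1); pose proof (evals_det _ _ _ _ H0 _ H2) end.
    subst. reflexivity.
Qed.

Definition Sep e a y (D : nat -> bool) := forall S, subset S D -> infinite S ->
  eval S e [a] 1 /\ eval S e [y] 0.
Definition G e a y (R : nat -> bool) := ~ exists D, subset D R /\ infinite D /\ Sep e a y D.

Lemma subset_trans A B C : subset A B -> subset B C -> subset A C.
Proof. unfold subset; auto. Qed.
Lemma subset_refl A : subset A A.
Proof. unfold subset; auto. Qed.

Lemma G_hered e a y R R' : G e a y R -> subset R' R -> G e a y R'.
Proof. intros HG HR [D [HD [Hi Hs]]]. apply HG. exists D. split; [eapply subset_trans; eauto|auto]. Qed.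

Lemma pair_lemma e a a' R : infinite R ->
  exists R', subset R' R /\ infinite R' /\ (G e a a' R' \/ G e a' a R').
Proof.
  intro HR. destruct (classic (exists D, subset D R /\ infinite D /\ Sep e a' a D)) as [[D [HD [Hi Hs]]]|Hn].
  - exists D. split; [auto|split; [auto|left]].
    intros [D' [HD' [Hi' Hs']]].
    destruct (Hs' D' (subset_refl _) Hi') as [H1 _].
    destruct (Hs D' HD' Hi') as [_ H2].
    pose proof (eval_det _ _ _ _ H1 _ H2). discriminate.
  - exists R. split; [apply subset_refl|split; [auto|right; exact Hn]].
Qed.

Lemma shrink_all (L : list (prf * nat * nat)) R : infinite R ->
  exists R', subset R' R /\ infinite R' /\
    forall e a a', In (e, a, a') L -> G e a a' R' \/ G e a' a R'.
Proof.
  revert R. induction L as [|[[e a] a'] L IH]; intros R HR.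
  - exists R. split; [apply subset_refl|split; [auto|intros; contradiction]].
  - destruct (IH R HR) as [R1 [H1 [Hi1 HL1]]].
    destruct (pair_lemma e a a' R1 Hi1) as [R2 [H2 [Hi2 HG2]]].
    exists R2. split; [eapply subset_trans; eauto|split; [auto|]].
    intros e0 b b' [Heq|Hin].
    + injection Heq; intros; subst; auto.
    + destruct (HL1 _ _ _ Hin); [left|right]; eapply G_hered; eauto.
Qed.

Lemma filter_len_nodup c cs : NoDup cs -> In c cs ->
  S (length (filter (fun x => negb (x =? c)) cs)) = length cs.
Proof.
  induction cs as [|x cs IH]; intros Hnd Hin; [contradiction|].
  inversion Hnd; subst. simpl. destruct (Nat.eqb_spec x c).
  - subst. simpl. f_equal.
    assert (forall l, ~ In c l -> filter (fun x => negb (x =? c)) l = l) as Hf.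
    { induction l as [|z l IHl]; intro Hn; simpl; auto.
      destruct (Nat.eqb_spec z c). subst; exfalso; apply Hn; left; auto.
      simpl. f_equal. apply IHl. intro; apply Hn; right; auto. }
    rewrite Hf; auto.
  - simpl. destruct Hin as [Hx|Hin]; [congruence|]. rewrite IH; auto.
Qed.

Lemma select R cands0 : forall (es : list prf) cs, NoDup cs ->
  (forall c, In c cs -> In c cands0) -> length es < length cs ->
  (forall e a a', In e es -> In a cs -> In a' cs -> G e a a' R \/ G e a' a R) ->
  exists b, In b cs /\ forall e, In e es -> exists y, In y cands0 /\ y <> b /\ G e b y R.
Proof.
  induction es as [|e es IH]; intros cs Hnd Hsub Hlen Htour.
  - destruct cs as [|c cs]; simpl in Hlen; [lia|]. exists c. split; [left; auto|intros; contradiction].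
  - assert (exists c, In c cs /\ forall x, In x cs -> x <> c ->
              exists y, In y cands0 /\ y <> x /\ G e x y R) as [c [Hc Hgood]].
    { destruct (classic (exists c, In c cs /\ forall y, In y cs -> y <> c -> ~ G e c y R))
        as [[c [Hc Hbad]]|Hno].
      - exists c. split; auto. intros x Hx Hxc. exists c. split; [auto|split; [auto|]].
        destruct (Htour e x c (or_introl eq_refl) Hx Hc) as [H|H]; auto.
        exfalso. exact (Hbad x Hx Hxc H).
      - destruct cs as [|c cs]; simpl in Hlen; [lia|]. exists c. split; [left; auto|].
        intros x Hx _. apply NNPP. intro Hn. apply Hno. exists x. split; auto.
        intros y Hy Hyx HG. apply Hn. exists y. split; auto. }
    set (cs' := filter (fun x => negb (x =? c)) cs).
    assert (Hlen' : length es < length cs').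
    { pose proof (filter_len_nodup c cs Hnd Hc). simpl in Hlen. unfold cs'. lia. }
    destruct (IH cs') as [b [Hb Hbg]].
    + apply NoDup_filter; auto.
    + intros x Hx. apply filter_In in Hx. apply Hsub; tauto.
    + auto.
    + intros e0 a a' He Ha Ha'. apply filter_In in Ha. apply filter_In in Ha'.
      apply Htour; [right; auto|tauto|tauto].
    + apply filter_In in Hb. destruct Hb as [Hb Hbc].
      exists b. split; auto. intros e0 [He|He].
      * subst e0. apply Hgood; auto. intro; subst. rewrite Nat.eqb_refl in Hbc. discriminate.
      * auto.
Qed.

Lemma in_le_sum x l : In x l -> x <= list_sum l.
Proof. induction l as [|z l IH]; simpl; intros H; [contradiction|]. destruct H as [H|H]; [subst; lia|]. specialize (IH H); lia. Qed.

Lemma cands_exist k m R : infinite R ->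
  exists l, length l = m /\ NoDup l /\ forall x, In x l -> R x = true /\ k <= x.
Proof.
  intro HR. induction m as [|m [l [Hl [Hnd Hx]]]].
  - exists []. simpl. split; [auto|split; [constructor|intros; contradiction]].
  - destruct (HR (k + list_sum l + 1)) as [z [Hz HRz]].
    exists (z :: l). split; [simpl; auto|split].
    + constructor; auto. intro Hin. apply in_le_sum in Hin. lia.
    + intros x [Hxz|Hin]; [subst; split; [auto|lia]|auto].
Qed.

Definition remv (l : list nat) (R : nat -> bool) := fun n => R n && negb (existsb (Nat.eqb n) l).

Lemma remv_inf l R : infinite R -> infinite (remv l R).
Proof.
  intros HR n. destruct (HR (n + list_sum l + 1)) as [m [Hm HRm]].
  exists m. split; [lia|]. unfold remv. rewrite HRm. simpl.
  destruct (existsb (Nat.eqb m) l) eqn:E; auto.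
  apply existsb_exists in E. destruct E as [x [Hx Hmx]]. apply Nat.eqb_eq in Hmx. subst.
  apply in_le_sum in Hx. lia.
Qed.

Lemma remv_sub l R : subset (remv l R) R.
Proof. intros n H. unfold remv in H. apply andb_prop in H. tauto. Qed.

Lemma remv_out l R x : In x l -> remv l R x = false.
Proof.
  intro H. unfold remv. destruct (R x); simpl; auto.
  assert (existsb (Nat.eqb x) l = true) as E. { apply existsb_exists. exists x. rewrite Nat.eqb_refl. auto. }
  rewrite E. reflexivity.
Qed.

Definition Pspec (enum : nat -> prf) k (R : nat -> bool) (p : nat * (nat -> bool)) :=
  let (b, R') := p in
  R b = true /\ k <= b /\ subset R' R /\ infinite R' /\ R' b = false /\
  forall j, j <= k -> exists y, y <> b /\ R y = true /\ R' y = false /\ G (enum j) b y R'.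

Lemma step enum k R : infinite R -> exists p, Pspec enum k R p.
Proof.
  intro HR. destruct (cands_exist k (S (S k)) R HR) as [l [Hl [Hnd Hx]]].
  set (es := map enum (seq 0 (S k))).
  destruct (shrink_all (list_prod (list_prod es l) l) R HR) as [R1 [H1 [Hi1 HG1]]].
  destruct (select R1 l es l Hnd (fun c H => H)) as [b [Hb Hbg]].
  - unfold es. rewrite length_map, length_seq. lia.
  - intros e a a' He Ha Ha'. apply HG1. apply in_prod; [apply in_prod|]; auto.
  - exists (b, remv l R1). simpl.
    destruct (Hx b Hb) as [HRb Hkb].
    split; [auto|split; [auto|split; [eapply subset_trans; [apply remv_sub|exact H1]|split]]].
    + apply remv_inf; auto.
    + split; [apply remv_out; auto|].
      intros j Hj. destruct (Hbg (enum j)) as [y [Hy [Hyb HG]]].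
      * unfold es. apply in_map. apply in_seq. lia.
      * exists y. split; [auto|split; [apply Hx; auto|split; [apply remv_out; auto|]]].
        eapply G_hered; [exact HG|apply remv_sub].
Qed.

Section Constr.
Variable enum : nat -> prf.
Variable stepf : nat -> (nat -> bool) -> nat * (nat -> bool).
Hypothesis Hstep : forall k R, infinite R -> Pspec enum k R (stepf k R).
Variable X : nat -> bool.
Hypothesis HX : infinite X.

Fixpoint Rs (k : nat) : nat -> bool :=
  match k with 0 => X | S k' => snd (stepf k' (Rs k')) end.
Definition bs k := fst (stepf k (Rs k)).

Lemma Rs_inf k : infinite (Rs k) /\ subset (Rs k) X.
Proof.
  induction k as [|k [IH1 IH2]]; simpl.
  - split; [auto|apply subset_refl].
  - pose proof (Hstep k _ IH1) as P. destruct (stepf k (Rs k)) as [b R'] eqn:E. simpl.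
    destruct P as [_ [_ [Hs [Hi _]]]]. split; [auto|eapply subset_trans; eauto].
Qed.

Lemma spec_k k : Pspec enum k (Rs k) (bs k, Rs (S k)).
Proof.
  pose proof (Hstep k _ (proj1 (Rs_inf k))) as P. unfold bs. simpl.
  destruct (stepf k (Rs k)); exact P.
Qed.

Lemma Rs_mono k i : k <= i -> subset (Rs i) (Rs k).
Proof.
  induction 1; [apply subset_refl|].
  eapply subset_trans; [|exact IHle]. pose proof (spec_k m) as P. unfold Pspec in P. tauto.
Qed.

Lemma bs_in k : Rs k (bs k) = true.
Proof. pose proof (spec_k k) as P. unfold Pspec in P. tauto. Qed.

Lemma bs_ge k : k <= bs k.
Proof. pose proof (spec_k k) as P. unfold Pspec in P. tauto. Qed.

Lemma bs_out i k : i < k -> Rs k (bs i) = false.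
Proof.
  intro H. destruct (Rs k (bs i)) eqn:E; auto.
  apply (Rs_mono (S i) k H) in E. pose proof (spec_k i) as P. unfold Pspec in P.
  destruct P as [_ [_ [_ [_ [P _]]]]]. congruence.
Qed.

Definition Bset n : bool := if excluded_middle_informative (exists k, bs k = n) then true else false.

Lemma Bset_spec n : Bset n = true <-> exists k, bs k = n.
Proof. unfold Bset. destruct (excluded_middle_informative _); split; intros; auto; congruence. Qed.

Lemma bound_list j : forall i, i < j -> bs i <= list_sum (map bs (seq 0 j)).
Proof. intros i Hi. apply in_le_sum. apply in_map. apply in_seq. lia. Qed.

Hypothesis Henum : forall e, exists n, enum n = e.

Theorem main_constr : subset Bset X /\ infinite Bset /\
    forall C D : nat -> bool,
      subset C Bset -> infinite C -> subset D Bset -> infinite D ->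
      ~ (exists e : prf, forall S : nat -> bool,
            subset S D -> infinite S -> functional_computes e S C).
Proof.
  split; [|split].
  - intros n Hn. apply Bset_spec in Hn. destruct Hn as [k Hk]. subst.
    apply (proj2 (Rs_inf k)). apply bs_in.
  - intros n. exists (bs n). split; [apply bs_ge|]. apply Bset_spec. eauto.
  - intros C D HC HCi HD HDi [e He].
    destruct (Henum e) as [j Hj].
    destruct (HCi (S (list_sum (map bs (seq 0 j))))) as [c [Hc HCc]].
    destruct (proj1 (Bset_spec c) (HC c HCc)) as [k Hk]. subst c.
    assert (Hjk : j <= k).
    { destruct (le_lt_dec j k) as [|Hlt]; auto. pose proof (bound_list j k Hlt). lia. }
    pose proof (spec_k k) as P. unfold Pspec in P.
    destruct P as [_ [_ [_ [_ [_ Ptw]]]]].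
    destruct (Ptw j Hjk) as [y [Hyb [HRy [HRy' HG]]]].
    rewrite Hj in HG. apply HG.
    exists (fun n => D n && Rs (S k) n). split; [|split].
    + intros n Hn. apply andb_prop in Hn. tauto.
    + intros n. destruct (HDi (n + list_sum (map bs (seq 0 (S k))) + 1)) as [m [Hm HDm]].
      exists m. split; [lia|]. rewrite HDm. simpl.
      destruct (proj1 (Bset_spec m) (HD m HDm)) as [i Hi]. subst m.
      destruct (le_lt_dec i k) as [Hik|Hik].
      * pose proof (bound_list (S k) i ltac:(lia)). lia.
      * apply (Rs_mono (S k) i Hik). apply bs_in.
    + intros S0 HS HSi. pose proof (He S0 (fun n H => proj1 (andb_prop _ _ (HS n H))) HSi) as Hcomp.
      unfold functional_computes in Hcomp.
      assert (Cy : C y = false).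
      { destruct (C y) eqn:E; auto. apply HC in E. apply Bset_spec in E. destruct E as [i Hi]. subst y.
        destruct (lt_eq_lt_dec i k) as [[Hik|Hik]|Hik].
        - rewrite bs_out in HRy; try discriminate; auto.
        - subst; try congruence.
        - rewrite (Rs_mono (S k) i Hik _ (bs_in i)) in HRy'. discriminate. }
      pose proof (Hcomp (bs k)) as H1. pose proof (Hcomp y) as H2. rewrite HCc in H1. rewrite Cy in H2. auto.
Qed.
End Constr.

Theorem proposition3p8 :
  forall X : nat -> bool, infinite X ->
  exists B : nat -> bool, subset B X /\ infinite B /\
    forall C D : nat -> bool,
      subset C B -> infinite C -> subset D B -> infinite D ->
      ~ (exists e : prf, forall S : nat -> bool,
            subset S D -> infinite S -> functional_computes e S C).
Proof.
  intros X HX.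
  destruct enum_ex as [enum Henum].
  assert (H : forall k R, exists p, infinite R -> Pspec enum k R p).
  { intros k R. destruct (classic (infinite R)) as [HR|HR].
    - destruct (step enum k R HR) as [p Hp]. exists p. auto.
    - exists (0, R). intro; contradiction. }
  set (stepf := fun k R => proj1_sig (constructive_indefinite_description _ (H k R))).
  assert (Hs : forall k R, infinite R -> Pspec enum k R (stepf k R)).
  { intros k R HR. unfold stepf. destruct (constructive_indefinite_description _ (H k R)) as [p Hp]. simpl. auto. }
  exists (Bset stepf X).
  eapply main_constr; eauto.
Qed.
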